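(* Let $\Gamma$ be a finite set of models, $p(\bm{y}\mid\bm{\gamma})\ge0$ a marginal likelihood for each $\bm{\gamma}\in\Gamma$, and $\pi(\bm{\gamma}\mid\bm{\omega})$, $\bm{\omega}\in\mathbb{R}^q$, an arbitrary model prior (positive and differentiable in $\bm{\omega}$). Let $p(\bm{y}\mid\bm{\omega})=\sum_{\bm{\gamma}}p(\bm{y}\mid\bm{\gamma})\pi(\bm{\gamma}\mid\bm{\omega})>0$ and $\pi(\bm{\gamma}\mid\bm{y},\bm{\omega})\propto p(\bm{y}\mid\bm{\gamma})\pi(\bm{\gamma}\mid\bm{\omega})$. Then $$\nabla_{\bm{\omega}}\log p(\bm{y}\mid\bm{\omega})=E_{\bm{\gamma}}\big[\nabla_{\bm{\omega}}\log\pi(\bm{\gamma}\mid\bm{\omega})\mid\bm{y},\bm{\omega}\big]=\sum_{\bm{\gamma}}\pi(\bm{\gamma}\mid\bm{y},\bm{\omega})\nabla_{\bm{\omega}}\log\pi(\bm{\gamma}\mid\bm{\omega}).$$ If $\Gamma=\{0,1\}^p$ and $\pi(\bm{\gamma}\mid\bm{\omega})=\prod_{j=1}^p\mathrm{Bern}(\gamma_j;m_j(\bm{\omega}))$ for given differentiable $m_j:\mathbb{R}^q\to(0,1)$, then $$\nabla_{\bm{\omega}}\log p(\bm{y}\mid\bm{\omega})=\sum_{j=1}^p\frac{\nabla_{\bm{\omega}}m_j(\bm{\omega})}{m_j(\bm{\omega})[1-m_j(\bm{\omega})]}\big[\pi(\gamma_j=1\mid\bm{y},\bm{\omega})-\pi(\gamma_j=1\mid\bm{\omega})\big].$$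 Further, for the inverse logit $m_j(\bm{\omega})=(1+e^{-\bm{z}_j^T\bm{\omega}})^{-1}$ with given $\bm{z}_j\in\mathbb{R}^q$, $\nabla_{\bm{\omega}}\log p(\bm{y}\mid\bm{\omega})=\sum_{j=1}^p\bm{z}_j\big[\pi(\gamma_j=1\mid\bm{y},\bm{\omega})-\pi(\gamma_j=1\mid\bm{\omega})\big]$.
   Context: $\pi(\gamma_j=1\mid\bm{y},\bm{\omega})=\sum_{\bm{\gamma}:\gamma_j=1}\pi(\bm{\gamma}\mid\bm{y},\bm{\omega})$ is the posterior inclusion probability and $\pi(\gamma_j=1\mid\bm{\omega})=m_j(\bm{\omega})$ the prior inclusion probability. *)

(* Defs.v *)
From HB Require Import structures.
From mathcomp Require Import all_boot all_order all_algebra.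
From mathcomp Require Import all_classical all_reals all_analysis.
Set Implicit Arguments. Unset Strict Implicit. Unset Printing Implicit Defensive.
Import Order.TTheory GRing.Theory Num.Theory.
Import numFieldNormedType.Exports.
Local Open Scope ring_scope.

Definition grad {R : realType} {q : nat} (f : 'rV[R]_q -> R) (w : 'rV[R]_q)
  : 'rV[R]_q := \row_(k < q) ('D_(delta_mx 0 k) f w).

Definition marg {R : realType} {G : finType} {q : nat}
  (lik : G -> R) (prior : G -> 'rV[R]_q -> R) (w : 'rV[R]_q) : R :=
  \sum_(g : G) lik g * prior g w.

Definition post {R : realType} {G : finType} {q : nat}
  (lik : G -> R) (prior : G -> 'rV[R]_q -> R) (g : G) (w : 'rV[R]_q) : R :=
  lik g * prior g w / marg lik prior w.

Definition bern_prior {R : realType} {p q : nat} (m : 'I_p -> 'rV[R]_q -> R)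
  (g : {ffun 'I_p -> bool}) (w : 'rV[R]_q) : R :=
  \prod_(j < p) (if g j then m j w else 1 - m j w).

Definition post_incl {R : realType} {p q : nat}
  (lik : {ffun 'I_p -> bool} -> R) (m : 'I_p -> 'rV[R]_q -> R)
  (j : 'I_p) (w : 'rV[R]_q) : R :=
  \sum_(g : {ffun 'I_p -> bool} | g j) post lik (bern_prior m) g w.

Definition invlogit {R : realType} {q : nat} (z : 'rV[R]_q) (w : 'rV[R]_q) : R :=
  (1 + expR (- \sum_(k < q) z 0 k * w 0 k))^-1.

(* Main.v *)
Require Import Defs.
From HB Require Import structures.
From mathcomp Require Import all_boot all_order all_algebra.
From mathcomp Require Import all_classical all_reals all_analysis.
From mathcomp Require Import ring lra.
Import Order.TTheory GRing.Theory Num.Theory.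
Import numFieldNormedType.Exports.
Local Open Scope ring_scope.


Section H.
Context {R : realType} {V : normedModType R}.

Lemma Dcomp (f : V -> R) (g : R -> R) (dg : R) w v :
  differentiable f w -> is_derive (f w) 1 g dg ->
  differentiable (fun x => g (f x)) w /\
  'D_v (fun x => g (f x)) w = dg * 'D_v f w.
Proof.
move=> df [dg1 dg2].
have dgd : differentiable g (f w) by apply/derivable1_diffP.
have dc : differentiable (g \o f) w by apply: differentiable_comp.
split; first exact: dc.
rewrite (deriveE v dc) diff_comp // deriv1E //= derive1E dg2 -deriveE //.
by rewrite mulrC.
Qed.

Lemma Dln (f : V -> R) w v : differentiable f w -> 0 < f w ->
  differentiable (fun x => ln (f x)) w /\
  'D_v (fun x => ln (f x)) w = 'D_v f w / f w.
Proof.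
move=> df fp.
have [h1 h2] := Dcomp f (@ln R) _ w v df (is_derive1_ln fp).
by split => //; rewrite h2 mulrC.
Qed.

Lemma Dscal (f : V -> R) (c : R) w v : derivable f w v ->
  'D_v (fun x => c * f x) w = c * 'D_v f w.
Proof. by move=> df; rewrite -deriveMl. Qed.

Lemma derivable_scal (f : V -> R) (c : R) w v : derivable f w v ->
  derivable (fun x => c * f x) w v.
Proof. move=> df; exact: derivableM (derivable_cst _ _ _) df. Qed.

Lemma diff_scal (f : V -> R) (c : R) w : differentiable f w ->
  differentiable (fun x => c * f x) w.
Proof. move=> df; exact: differentiableM (differentiable_cst _ _) df. Qed.

Lemma Donem (f : V -> R) w v : derivable f w v ->
  'D_v (fun x => 1 - f x) w = - 'D_v f w.
Proof.
move=> df; rewrite (_ : (fun x => 1 - f x) = cst 1 - f) //.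
by rewrite deriveB // ?derive_cst ?sub0r //; exact: derivable_cst.
Qed.

Lemma diff_onem (f : V -> R) w : differentiable f w ->
  differentiable (fun x => 1 - f x) w.
Proof.
move=> df; rewrite (_ : (fun x => 1 - f x) = cst 1 - f) //.
by apply: differentiableB => //; exact: differentiable_cst.
Qed.

Lemma Dsum (I : Type) (s : seq I) (F : I -> V -> R) w v :
  (forall i, derivable (F i) w v) ->
  derivable (fun x => \sum_(i <- s) F i x) w v /\
  'D_v (fun x => \sum_(i <- s) F i x) w = \sum_(i <- s) 'D_v (F i) w.
Proof.
move=> dF; elim: s => [|a s [IH1 IH2]].
  rewrite (_ : (fun x => \sum_(i <- [::]) F i x) = cst 0); last first.
    by apply/funext => x; rewrite big_nil.
  by rewrite big_nil derive_cst; split => //; exact: derivable_cst.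
rewrite (_ : (fun x => \sum_(i <- a :: s) F i x) =
   F a + (fun x => \sum_(i <- s) F i x)); last first.
  by apply/funext => x; rewrite big_cons.
rewrite big_cons; split; first exact: derivableD.
by rewrite deriveD // IH2.
Qed.

Lemma diff_sum (I : Type) (s : seq I) (F : I -> V -> R) w :
  (forall i, differentiable (F i) w) ->
  differentiable (fun x => \sum_(i <- s) F i x) w.
Proof.
move=> dF; elim: s => [|a s IH].
  rewrite (_ : (fun x => \sum_(i <- [::]) F i x) = cst 0); last first.
    by apply/funext => x; rewrite big_nil.
  exact: differentiable_cst.
rewrite (_ : (fun x => \sum_(i <- a :: s) F i x) =
   F a + (fun x => \sum_(i <- s) F i x)); last first.
  by apply/funext => x; rewrite big_cons.
exact: differentiableD.
Qed.

Lemma diff_prod (I : Type) (s : seq I) (F : I -> V -> R) w :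
  (forall i, differentiable (F i) w) ->
  differentiable (fun x => \prod_(i <- s) F i x) w.
Proof.
move=> dF; elim: s => [|a s IH].
  rewrite (_ : (fun x => \prod_(i <- [::]) F i x) = cst 1); last first.
    by apply/funext => x; rewrite big_nil.
  exact: differentiable_cst.
rewrite (_ : (fun x => \prod_(i <- a :: s) F i x) =
   F a * (fun x => \prod_(i <- s) F i x)); last first.
  by apply/funext => x; rewrite big_cons.
exact: differentiableM.
Qed.

Lemma ln_prod (I : Type) (s : seq I) (F : I -> R) :
  (forall i, 0 < F i) -> ln (\prod_(i <- s) F i) = \sum_(i <- s) ln (F i).
Proof.
move=> Fp; elim: s => [|a s IH]; first by rewrite !big_nil ln1.
rewrite !big_cons lnM ?IH // ?qualifE //=.
by apply: prodr_gt0.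
Qed.

Lemma dder {f : V -> R} {w : V} (v : V) : differentiable f w -> derivable f w v.
Proof. exact: diff_derivable. Qed.
End H.


Lemma part1 (R : realType) (q : nat) (G : finType) (lik : G -> R) (prior : G -> 'rV[R]_q -> R) :
     (forall g, 0 <= lik g) ->
     (forall g w, 0 < prior g w) ->
     (forall g w, differentiable (prior g) w) ->
     (forall w, 0 < marg lik prior w) ->
     forall w : 'rV[R]_q,
       differentiable (fun v => ln (marg lik prior v)) w /\
       grad (fun v => ln (marg lik prior v)) w
       = \sum_(g : G) post lik prior g w *: grad (fun v => ln (prior g v)) w.
Proof.
move=> lik0 pr0 dpr mp w.
have dm : differentiable (marg lik prior) w.
  by apply: diff_sum => g; apply: diff_scal.
have [dl _] := Dln _ _ 0 dm (mp w).
split => //.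
apply/rowP => k; rewrite !mxE summxE.
have [_ ->] := Dln _ _ (delta_mx 0 k) dm (mp w).
have [_ ->] := Dsum _ (index_enum G) (fun g x => lik g * prior g x) w (delta_mx 0 k)
  (fun g => derivable_scal _ (lik g) _ _ (dder _ (dpr g w))).
rewrite mulr_suml; apply: eq_bigr => g _.
rewrite !mxE.
have [_ ->] := Dln _ _ (delta_mx 0 k) (dpr g w) (pr0 g w).
rewrite Dscal; last exact: dder.
rewrite /post; have := pr0 g w; have := mp w.
set M := marg _ _ _; set P := prior g w => Mp Pp.
field; apply/andP; split; rewrite gt_eqF //.
Qed.


Lemma part2 (R : realType) (q : nat) (p : nat) (lik : {ffun 'I_p -> bool} -> R) (m : 'I_p -> 'rV[R]_q -> R) :
     (forall g, 0 <= lik g) ->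
     (forall j w, 0 < m j w < 1) ->
     (forall j w, differentiable (m j) w) ->
     (forall w, 0 < marg lik (bern_prior m) w) ->
     forall w : 'rV[R]_q,
       grad (fun v => ln (marg lik (bern_prior m) v)) w
       = \sum_(j < p) ((post_incl lik m j w - m j w)
                        / (m j w * (1 - m j w))) *: grad (m j) w.
Proof.
move=> lik0 m01 dm margp w.
pose fac (j : 'I_p) (g : {ffun 'I_p -> bool}) v := if g j then m j v else 1 - m j v.
have facp : forall j g v, 0 < fac j g v.
  move=> j g v; rewrite /fac; have /andP[h1 h2] := m01 j v.
  by case: (g j) => //; rewrite subr_gt0.
have dfac : forall j g v, differentiable (fac j g) v.
  move=> j g v; rewrite /fac; case: (g j) => //; exact: diff_onem.
have prp : forall g v, 0 < bern_prior m g v.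
  by move=> g v; rewrite /bern_prior; apply: prodr_gt0 => j _; exact: (facp j g v).
have dpr : forall g v, differentiable (bern_prior m g) v.
  by move=> g v; rewrite /bern_prior; exact: (diff_prod _ _ (fun j => fac j g)).
have [_ ->] := @part1 _ _ _ lik (bern_prior m) lik0 prp dpr margp w.
apply/rowP => k; rewrite !summxE.
under eq_bigr do rewrite !mxE.
under [RHS]eq_bigr do rewrite !mxE.
set e := delta_mx 0 k.
have Dfac : forall j g, 'D_e (fun v => ln (fac j g v)) w =
   (if g j then 'D_e (m j) w / m j w else - 'D_e (m j) w / (1 - m j w)).
  move=> j g.
  have [_ ->] := Dln _ _ e (dfac j g w) (facp j g w).
  rewrite /fac; case: (g j) => //.
  by rewrite Donem //; exact: dder.
have Lp : forall g, (fun v => ln (bern_prior m g v)) =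
    (fun v => \sum_(j <- index_enum 'I_p) ln (fac j g v)).
  move=> g; apply/funext => v; rewrite /bern_prior ln_prod // => j; exact: (facp j g v).
under eq_bigr => g _ do rewrite Lp.
have dlf : forall j g, derivable (fun v => ln (fac j g v)) w e.
  move=> j g; have [h _] := Dln _ _ e (dfac j g w) (facp j g w); exact: dder.
under eq_bigr => g _ do rewrite (Dsum _ _ (fun j v => ln (fac j g v)) w e (fun j => dlf j g)).2.
under eq_bigr => g _ do under eq_bigr => j _ do rewrite Dfac.
have tot : \sum_g post lik (bern_prior m) g w = 1.
  rewrite /post -mulr_suml; apply: divff; rewrite gt_eqF //; exact: margp.
under eq_bigr => g _ do rewrite mulr_sumr.
rewrite exchange_big /=; apply: eq_bigr => j _.
rewrite (bigID (fun g : {ffun 'I_p -> bool} => g j)) /=.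
under eq_bigr => g gj do rewrite gj.
under [X in _ + X = _]eq_bigr => g gj do rewrite (negbTE gj).
rewrite (bigID (fun g : {ffun 'I_p -> bool} => g j)) /= in tot.
have Sn : \sum_(g : {ffun 'I_p -> bool} | ~~ g j) post lik (bern_prior m) g w = 1 - post_incl lik m j w.
  by rewrite -tot /post_incl addrC addrK.
set A := 'D_e (m j) w / m j w.
set B := - 'D_e (m j) w / (1 - m j w).
have S1 : \sum_(g : {ffun 'I_p -> bool} | g j) post lik (bern_prior m) g w * A = post_incl lik m j w * A.
  by rewrite /post_incl mulr_suml.
have S2 : \sum_(g : {ffun 'I_p -> bool} | ~~ g j) post lik (bern_prior m) g w * B = (1 - post_incl lik m j w) * B.
  by rewrite -Sn mulr_suml.
rewrite S1 S2 /A /B.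
have /andP[h1 h2] := m01 j w.
set P := post_incl lik m j w; set M := m j w; set d := 'D_e (m j) w.
have M0 : M != 0 by rewrite gt_eqF.
have M1 : 1 - M != 0 by rewrite gt_eqF // subr_gt0.
by field; rewrite M0 M1.
Qed.


Lemma Dcoord (R : realType) (q : nat) (a v : 'rV[R]_q) (i : 'I_q) :
  'D_v (fun x : 'rV[R]_q => x 0 i) a = v 0 i.
Proof.
have := @derive_mx R _ 1 q id a v (@derivable_id _ _ a v).
rewrite derive_id => /(congr1 (fun M : 'rV[R]_q => M 0 i)); rewrite mxE => ->.
by [].
Qed.

Lemma invlogit_prop (R : realType) (q : nat) (z : 'rV[R]_q) (w : 'rV[R]_q) (k : 'I_q) :
  [/\ 0 < invlogit z w < 1, differentiable (invlogit z) w &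
   'D_(delta_mx 0 k) (invlogit z) w = invlogit z w * (1 - invlogit z w) * z 0 k].
Proof.
set e := delta_mx 0 k.
pose s := fun v : 'rV[R]_q => \sum_(i <- index_enum 'I_q) z 0 i * v 0 i.
have ds : differentiable s w.
  apply: diff_sum => i; apply: diff_scal; exact: differentiable_coord.
have Ds : 'D_e s w = z 0 k.
  have [_ ->] := Dsum _ (index_enum 'I_q) (fun i (v : 'rV[R]_q) => z 0 i * v 0 i) w e
     (fun i => derivable_scal _ _ _ _ (dder _ (differentiable_coord _ _ _))).
  rewrite (eq_bigr (fun i => z 0 i * e 0 i)); last first.
    move=> i _; rewrite Dscal ?Dcoord //; exact: dder (differentiable_coord _ _ _).
  rewrite /e (bigD1 k) //= big1 => [|i ik]; rewrite mxE.
    by rewrite !eqxx /= mulr1 addr0.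
  by rewrite (negbTE ik) andbF mulr0.
have dns : differentiable (fun v => - s v) w.
  by rewrite (_ : (fun v => - s v) = - s) //; exact: differentiableN.
have Dns : 'D_e (fun v => - s v) w = - z 0 k.
  by rewrite (_ : (fun v => - s v) = - s) // deriveN ?Ds //; exact: dder.
have [dE DE] := Dcomp (fun v => - s v) expR _ w e dns (is_derive_expR _).
rewrite Dns in DE.
pose E := fun v => expR (- s v).
have dE' : differentiable E w := dE.
have DE' : 'D_e E w = E w * - z 0 k := DE.
clear dE DE.
have d1E : differentiable (fun v => 1 + E v) w.
  rewrite (_ : (fun v => 1 + E v) = cst 1 + E); last by [].
  apply: differentiableD => //; exact: differentiable_cst.
have D1E : 'D_e (fun v => 1 + E v) w = 'D_e E w.
  rewrite (_ : (fun v => 1 + E v) = cst 1 + E); last by [].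
  rewrite deriveD; [by rewrite derive_cst add0r | exact: derivable_cst | exact: dder].
have Ep : forall v, 0 < E v by move=> v; exact: expR_gt0.
have E10 : 1 + E w != 0 by rewrite gt_eqF // ltr_wpDl // ltW.
have -> : invlogit z = fun v => (1 + E v)^-1 by [].
split.
- apply/andP; split; first by rewrite invr_gt0 ltr_wpDl // ltW.
  by rewrite invf_lt1 ?ltr_pwDr // ltr_wpDl // ltW.
- exact: differentiableV.
- rewrite deriveV; [|exact: E10|exact: dder].
  rewrite D1E DE'.
  move: E10 (Ep w); generalize (E w) => x hx hp.
  rewrite -[_ *: _]/(_ * _).
  by field.
Qed.

Lemma invlogit_basic (R : realType) (q : nat) (z : 'rV[R]_q) (w : 'rV[R]_q) :
  0 < invlogit z w < 1 /\ differentiable (invlogit z) w.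
Proof.
pose s := fun v : 'rV[R]_q => \sum_(i <- index_enum 'I_q) z 0 i * v 0 i.
have ds : differentiable s w.
  apply: diff_sum => i; apply: diff_scal; exact: differentiable_coord.
have dns : differentiable (fun v => - s v) w.
  by rewrite (_ : (fun v => - s v) = - s) //; exact: differentiableN.
have [dE _] := Dcomp (fun v => - s v) expR _ w w dns (is_derive_expR _).
pose E := fun v => expR (- s v).
have dE' : differentiable E w := dE.
clear dE.
have d1E : differentiable (fun v => 1 + E v) w.
  rewrite (_ : (fun v => 1 + E v) = cst 1 + E); last by [].
  apply: differentiableD => //; exact: differentiable_cst.
have Ep : forall v, 0 < E v by move=> v; exact: expR_gt0.
have E10 : 1 + E w != 0 by rewrite gt_eqF // ltr_wpDl // ltW.
have -> : invlogit z = fun v => (1 + E v)^-1 by [].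
split.
- apply/andP; split; first by rewrite invr_gt0 ltr_wpDl // ltW.
  by rewrite invf_lt1 ?ltr_pwDr // ltr_wpDl // ltW.
- exact: differentiableV.
Qed.

Lemma part3 (R : realType) (q : nat) (p : nat) (lik : {ffun 'I_p -> bool} -> R) (z : 'I_p -> 'rV[R]_q) :
     (forall g, 0 <= lik g) ->
     (forall w, 0 < marg lik (bern_prior (fun j => invlogit (z j))) w) ->
     forall w : 'rV[R]_q,
       grad (fun v => ln (marg lik (bern_prior (fun j => invlogit (z j))) v)) w
       = \sum_(j < p) (post_incl lik (fun j => invlogit (z j)) j w
                        - invlogit (z j) w) *: z j.
Proof.
move=> lik0 mp w.
rewrite (@part2 R q p lik (fun j => invlogit (z j)) lik0 _ _ mp w); first last.
- by move=> j w'; have [] := invlogit_basic _ _ (z j) w'.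
- by move=> j w'; have [] := invlogit_basic _ _ (z j) w'.
apply: eq_bigr => j _ /=.
have [/andP[h1 h2] _] := invlogit_basic _ _ (z j) w.
have -> : grad (invlogit (z j)) w = (invlogit (z j) w * (1 - invlogit (z j) w)) *: z j.
  apply/rowP => k; rewrite !mxE.
  by have [_ _ ->] := invlogit_prop _ _ (z j) w k.
rewrite scalerA divfK //.
by rewrite mulf_neq0 // gt_eqF // subr_gt0.
Qed.

Theorem theorem3 (R : realType) (q : nat) :
  (* general finite model space *)
  (forall (G : finType) (lik : G -> R) (prior : G -> 'rV[R]_q -> R),
     (forall g, 0 <= lik g) ->
     (forall g w, 0 < prior g w) ->
     (forall g w, differentiable (prior g) w) ->
     (forall w, 0 < marg lik prior w) ->
     forall w : 'rV[R]_q,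
       differentiable (fun v => ln (marg lik prior v)) w /\
       grad (fun v => ln (marg lik prior v)) w
       = \sum_(g : G) post lik prior g w *: grad (fun v => ln (prior g v)) w)
  /\
  (* product-Bernoulli prior on {0,1}^p *)
  (forall (p : nat) (lik : {ffun 'I_p -> bool} -> R) (m : 'I_p -> 'rV[R]_q -> R),
     (forall g, 0 <= lik g) ->
     (forall j w, 0 < m j w < 1) ->
     (forall j w, differentiable (m j) w) ->
     (forall w, 0 < marg lik (bern_prior m) w) ->
     forall w : 'rV[R]_q,
       grad (fun v => ln (marg lik (bern_prior m) v)) w
       = \sum_(j < p) ((post_incl lik m j w - m j w)
                        / (m j w * (1 - m j w))) *: grad (m j) w)
  /\
  (* inverse-logit inclusion probabilities *)
  (forall (p : nat) (lik : {ffun 'I_p -> bool} -> R) (z : 'I_p -> 'rV[R]_q),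
     (forall g, 0 <= lik g) ->
     (forall w, 0 < marg lik (bern_prior (fun j => invlogit (z j))) w) ->
     forall w : 'rV[R]_q,
       grad (fun v => ln (marg lik (bern_prior (fun j => invlogit (z j))) v)) w
       = \sum_(j < p) (post_incl lik (fun j => invlogit (z j)) j w
                        - invlogit (z j) w) *: z j).
Proof.
split; first exact: part1.
split; first exact: part2.
exact: part3.
Qed.
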